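(* Consider the following RSS-based localization setting. A stationary target is at an unknown position $\mathbf{s}=(x,y,0)\in\mathbb{R}^3$. There are $N$ UAVs; UAV $i$ ($1\le i\le N$) takes $M_i\ge 1$ measurements, the $j$-th one at position $\mathbf{u}_{i,j}=(x_{i,j},y_{i,j},h_{i,j})$. Let $r_{i,j}=\sqrt{(x-x_{i,j})^2+(y-y_{i,j})^2}$, $d_{i,j}=\sqrt{r_{i,j}^2+h_{i,j}^2}$, and let $\beta_{i,j}$ be the horizontal UAV–target angle, i.e. $(x_{i,j}-x,\,y_{i,j}-y)=r_{i,j}(\cos\beta_{i,j},\sin\beta_{i,j})$, with $\mathbf{g}_{i,j}=(\cos\beta_{i,j},\sin\beta_{i,j})^T$. The $j$-th measurement of UAV $i$ is $R_{i,j}=p_0-10\gamma\log_{10}(d_{i,j})+\eta_{i,j}$ with known $p_0$, $\gamma>0$ and independent noises $\eta_{i,j}\sim\mathcal{N}(0,\sigma_i^2)$, $\sigma_i>0$. The Fisher information matrix for $(x,y)$ is $$\mathbf{F}=\Big(\frac{10\gamma}{\ln 10}\Big)^2\sum_{i=1}^N\sum_{j=1}^{M_i}\sigma_i^{-2}\frac{r_{i,j}^2}{d_{i,j}^4}\mathbf{g}_{i,j}\mathbf{g}_{i,j}^T.$$ A configuration is feasible if $r_{i,j}\ge r_0$, $h_{i,j}\ge h_0$ for all $i,j$, and $\|\mathbf{u}_{i,j}-\mathbf{u}_{i,j-1}\|\le t_0c_{\max}$ for $2\le j\le M_i$, where $r_0,h_0,t_0>0$, $c_{\max}\ge 0$ are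 given. Problem P is to maximize $\det\mathbf{F}$ over feasible configurations. Assume the UAVs hover, i.e. $c_{\max}=0$, so $\mathbf{u}_{i,j}=\mathbf{u}_i$ (and $r_{i,j}=r_i$, $h_{i,j}=h_i$, $\mathbf{g}_{i,j}=\mathbf{g}_i$) for all $j$. Let $t$ be an index with $M_t\sigma_t^{-2}=\max\{M_i\sigma_i^{-2}:1\le i\le N\}$ and let $r^*=\max\{r_0,h_0\}$. If $M_t\sigma_t^{-2}>\frac12\sum_{i=1}^N M_i\sigma_i^{-2}$, then any configuration satisfying $r_i=r^*$ and $h_i=h_0$ for all $i$, together with $\mathbf{g}_t^T\mathbf{g}_i=0$ for all $i\ne t$, is an optimal solution of problem P.
   Context: The optimization is over UAV positions for a given target position $\mathbf{s}$. *)

(* Defs.v *)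
From HB Require Import structures.
From mathcomp Require Import all_boot all_order all_algebra.
From mathcomp Require Import all_classical all_reals all_analysis.
Set Implicit Arguments. Unset Strict Implicit. Unset Printing Implicit Defensive.
Import Order.TTheory GRing.Theory Num.Theory.
Local Open Scope ring_scope.

Record pos3 (R : realType) := P3 { px : R; py : R; ph : R }.

Section UAV.
Variable R : realType.

Definition hdist (x y : R) (u : pos3 R) : R :=
  Num.sqrt ((x - px u) ^+ 2 + (y - py u) ^+ 2).

Definition dist3 (x y : R) (u : pos3 R) : R :=
  Num.sqrt (hdist x y u ^+ 2 + ph u ^+ 2).

Definition pdist (u v : pos3 R) : R :=
  Num.sqrt ((px u - px v) ^+ 2 + (py u - py v) ^+ 2 + (ph u - ph v) ^+ 2).

Definition gvec (x y : R) (u : pos3 R) : 'cV[R]_2 :=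
  \col_(k < 2) (if k == 0 then (px u - x) / hdist x y u
                else (py u - y) / hdist x y u).

(* A configuration: c i j is the position of the (j+1)-th measurement of
   UAV i (indices 0-based; only j < M i matters). *)
Definition FIM (N : nat) (M : 'I_N -> nat) (sigma : 'I_N -> R) (gamma : R)
    (x y : R) (c : 'I_N -> nat -> pos3 R) : 'M[R]_2 :=
  ((10 * gamma) / ln 10) ^+ 2 *:
    \sum_(i < N) \sum_(j < M i)
      ((sigma i) ^- 2 * (hdist x y (c i j) ^+ 2 / dist3 x y (c i j) ^+ 4)) *:
        (gvec x y (c i j) *m (gvec x y (c i j))^T).

Definition feasible (N : nat) (M : 'I_N -> nat) (r0 h0 t0 cmax x y : R)
    (c : 'I_N -> nat -> pos3 R) : Prop :=
  forall (i : 'I_N) (j : nat), (j < M i)%N ->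
    [/\ r0 <= hdist x y (c i j), h0 <= ph (c i j) &
        (0 < j)%N -> pdist (c i j) (c i j.-1) <= t0 * cmax].

Definition optimalP (N : nat) (M : 'I_N -> nat) (sigma : 'I_N -> R)
    (gamma r0 h0 t0 cmax x y : R) (c : 'I_N -> nat -> pos3 R) : Prop :=
  feasible M r0 h0 t0 cmax x y c /\
  forall c', feasible M r0 h0 t0 cmax x y c' ->
    \det (FIM M sigma gamma x y c') <= \det (FIM M sigma gamma x y c).

End UAV.

(* Main.v *)
Require Import Defs.
From HB Require Import structures.
From mathcomp Require Import all_boot all_order all_algebra.
From mathcomp Require Import all_classical all_reals all_analysis.
From mathcomp Require Import ring lra.
Import Order.TTheory GRing.Theory Num.Theory.
Local Open Scope ring_scope.

Lemma det22 (R : comNzRingType) (A : 'M[R]_2) :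
  \det A = A 0 0 * A 1 1 - A 0 1 * A 1 0.
Proof.
rewrite (expand_det_row _ 0) big_ord_recl big_ord1 /cofactor !det_mx11 /=.
rewrite !mxE /=.
have L0 : forall (k : 'I_2) (i : 'I_1), k = 0 -> lift k i = 1.
  by move=> k i ->; rewrite (ord1 i); apply/val_inj.
have L1 : forall (k : 'I_2) (i : 'I_1), k = 1 -> lift k i = 0.
  by move=> k i ->; rewrite (ord1 i); apply/val_inj.
rewrite (L1 (lift ord0 ord0)); last by apply/val_inj.
rewrite !L0 //.
rewrite /bump /= expr0 expr1 mul1r; ring.
Qed.


Lemma key (R : realFieldType) (N : nat) (t : 'I_N) (v V c s : 'I_N -> R) :
  (forall i, 0 <= v i) -> (forall i, v i <= V i) ->
  (forall i, c i ^+ 2 + s i ^+ 2 = 1) ->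
  \sum_(i | i != t) V i <= V t ->
  (\sum_i v i * c i ^+ 2) * (\sum_i v i * s i ^+ 2) - (\sum_i v i * (c i * s i)) ^+ 2
  <= V t * \sum_(i | i != t) V i.
Proof.
move=> v0 vV cs1 Vt.
rewrite (bigD1 t) //= [X in _ * X - _](bigD1 t) //= [X in _ - X ^+ 2](bigD1 t) //=.
set al := \sum_(i | i != t) v i * c i ^+ 2.
set de := \sum_(i | i != t) v i * s i ^+ 2.
set be := \sum_(i | i != t) v i * (c i * s i).
set Q := \sum_(i | i != t) V i.
have VQ : Q <= V t := Vt.
pose C := c t; pose S := s t.
pose z := \sum_(i | i != t) v i * (C * c i + S * s i) ^+ 2.
pose w := \sum_(i | i != t) v i * (S * c i - C * s i) ^+ 2.
have hz : z = al * C ^+ 2 + be * (2 * C * S) + de * S ^+ 2.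
  rewrite /z /al /be /de !mulr_suml -big_split -big_split /=; apply: eq_bigr => i _; ring.
have hw : w = al * S ^+ 2 - be * (2 * C * S) + de * C ^+ 2.
  rewrite /w /al /be /de !mulr_suml -sumrN -big_split -big_split /=.
  apply: eq_bigr => i _; ring.
have z0 : 0 <= z by apply: sumr_ge0 => i _; apply: mulr_ge0 => //; exact: sqr_ge0.
have w0 : 0 <= w by apply: sumr_ge0 => i _; apply: mulr_ge0 => //; exact: sqr_ge0.
have zwq : z + w <= Q.
  rewrite /z /w -big_split /=; apply: ler_sum => i _.
  have -> : v i * (C * c i + S * s i) ^+ 2 + v i * (S * c i - C * s i) ^+ 2
     = v i * ((C ^+ 2 + S ^+ 2) * (c i ^+ 2 + s i ^+ 2)) by ring.
  by rewrite cs1 /C /S cs1 !mulr1.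
have CS : C ^+ 2 + S ^+ 2 = 1 by exact: cs1.
have vt0 := v0 t; have vtV := vV t.
have Hdet : (v t * C ^+ 2 + al) * (v t * S ^+ 2 + de) - (v t * (C * S) + be) ^+ 2
   = z * w + v t * w - (be * (C ^+ 2 - S ^+ 2) + (de - al) * C * S) ^+ 2.
  have e2 : z * w - (be * (C ^+ 2 - S ^+ 2) + (de - al) * C * S) ^+ 2
     = (C ^+ 2 + S ^+ 2) ^+ 2 * (al * de - be ^+ 2) by rewrite hz hw; ring.
  rewrite CS expr1n mul1r in e2.
  have -> : (v t * C ^+ 2 + al) * (v t * S ^+ 2 + de) - (v t * (C * S) + be) ^+ 2
     = (al * de - be ^+ 2) + v t * w by rewrite hw; ring.
  rewrite -e2; ring.
rewrite Hdet.
have sq := sqr_ge0 (be * (C ^+ 2 - S ^+ 2) + (de - al) * C * S).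
have h1 : (v t + z) * w <= (V t + z) * (Q - z).
  apply: ler_pM; lra.
have h2 : (V t + z) * (Q - z) <= V t * Q.
  have -> : (V t + z) * (Q - z) = V t * Q - z * (V t - Q) - z * z by ring.
  have : 0 <= z * (V t - Q) by apply: mulr_ge0; lra.
  have : 0 <= z * z by apply: mulr_ge0.
  lra.
lra.
Qed.

Lemma attain (R : realFieldType) (N : nat) (t : 'I_N) (v c s : 'I_N -> R) :
  (forall i, c i ^+ 2 + s i ^+ 2 = 1) ->
  (forall i, i != t -> c t * c i + s t * s i = 0) ->
  (\sum_i v i * c i ^+ 2) * (\sum_i v i * s i ^+ 2) - (\sum_i v i * (c i * s i)) ^+ 2
  = v t * \sum_(i | i != t) v i.
Proof.
move=> cs1 orth.
rewrite (bigD1 t) //= [X in _ * X - _](bigD1 t) //= [X in _ - X ^+ 2](bigD1 t) //=.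
pose C := c t; pose S := s t.
have CS : C ^+ 2 + S ^+ 2 = 1 by exact: cs1.
have per : forall i, i != t ->
   [/\ c i ^+ 2 = S ^+ 2, s i ^+ 2 = C ^+ 2 & c i * s i = - (C * S)].
  move=> i it; have o := orth i it; have ci := cs1 i.
  pose l := C * s i - S * c i.
  have hc : c i = - S * l.
    have : c i * (C ^+ 2 + S ^+ 2) = C * (C * c i + S * s i) - S * l by rewrite /l; ring.
    by rewrite CS mulr1 o mulr0 sub0r => ->; ring.
  have hs : s i = C * l.
    have : s i * (C ^+ 2 + S ^+ 2) = S * (C * c i + S * s i) + C * l by rewrite /l; ring.
    by rewrite CS mulr1 o mulr0 add0r => ->.
  have hl : l ^+ 2 = 1.
    have : l ^+ 2 = (C ^+ 2 + S ^+ 2) * (c i ^+ 2 + s i ^+ 2) - (C * c i + S * s i) ^+ 2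
      by rewrite /l; ring.
    by rewrite CS ci o expr0n /= subr0 mul1r.
  split.
  - by rewrite hc exprMn hl mulr1 sqrrN.
  - by rewrite hs exprMn hl mulr1.
  - rewrite hc hs.
    have -> : - S * l * (C * l) = - (C * S) * l ^+ 2 by ring.
    by rewrite hl mulr1.
set Q := \sum_(i | i != t) v i.
have ea : \sum_(i | i != t) v i * c i ^+ 2 = S ^+ 2 * Q.
  rewrite /Q mulr_sumr; apply: eq_bigr => i it; have [-> _ _] := per i it; ring.
have ed : \sum_(i | i != t) v i * s i ^+ 2 = C ^+ 2 * Q.
  rewrite /Q mulr_sumr; apply: eq_bigr => i it; have [_ -> _] := per i it; ring.
have eb : \sum_(i | i != t) v i * (c i * s i) = - (C * S) * Q.
  rewrite /Q mulr_sumr; apply: eq_bigr => i it; have [_ _ ->] := per i it; ring.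
rewrite ea ed eb.
have e : (v t * C ^+ 2 + S ^+ 2 * Q) * (v t * S ^+ 2 + C ^+ 2 * Q) -
  (v t * (C * S) + - (C * S) * Q) ^+ 2 = v t * Q * (C ^+ 2 + S ^+ 2) ^+ 2 by ring.
by rewrite /C /S in e *; rewrite e cs1 expr1n mulr1.
Qed.

Section Main.
Context {R : realType}.

Definition cg (x y : R) (p : pos3 R) := (px p - x) / hdist x y p.
Definition sg (x y : R) (p : pos3 R) := (py p - y) / hdist x y p.

Lemma hdist2 (x y : R) p : hdist x y p ^+ 2 = (px p - x) ^+ 2 + (py p - y) ^+ 2.
Proof.
rewrite /hdist sqr_sqrtr; last by apply: addr_ge0; apply: sqr_ge0.
congr (_ + _); ring.
Qed.

Lemma dist3_2 (x y : R) p : dist3 x y p ^+ 2 = hdist x y p ^+ 2 + ph p ^+ 2.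
Proof. by rewrite /dist3 sqr_sqrtr //; apply: addr_ge0; apply: sqr_ge0. Qed.

Lemma cs1 (x y : R) p : 0 < hdist x y p -> cg x y p ^+ 2 + sg x y p ^+ 2 = 1.
Proof.
move=> h; rewrite /cg /sg !expr_div_n -mulrDl -hdist2 divff //.
by rewrite expf_neq0 // gt_eqF.
Qed.

Lemma gvecE (x y : R) p (k l : 'I_2) :
  (gvec x y p *m (gvec x y p)^T) k l =
  (if k == 0 then cg x y p else sg x y p) * (if l == 0 then cg x y p else sg x y p).
Proof. by rewrite mxE big_ord1 !mxE. Qed.


Lemma FIM_hover N (M : 'I_N -> nat) (sigma : 'I_N -> R) (gamma x y : R)
  (c : 'I_N -> nat -> pos3 R) (p : 'I_N -> pos3 R) :
  (forall i j, (j < M i)%N -> c i j = p i) ->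
  FIM M sigma gamma x y c = ((10 * gamma) / ln 10) ^+ 2 *:
    \sum_(i < N) ((M i)%:R * (sigma i ^- 2 * (hdist x y (p i) ^+ 2 / dist3 x y (p i) ^+ 4)))
       *: (gvec x y (p i) *m (gvec x y (p i))^T).
Proof.
move=> hc; rewrite /FIM; congr (_ *: _); apply: eq_bigr => i _.
rewrite (eq_bigr (fun _ => (sigma i ^- 2 * (hdist x y (p i) ^+ 2 / dist3 x y (p i) ^+ 4))
       *: (gvec x y (p i) *m (gvec x y (p i))^T))); last first.
  by move=> j _; rewrite hc.
by rewrite sumr_const card_ord scalerMnl mulr_natl.
Qed.

Lemma detFIM N (k : R) (w : 'I_N -> R) (x y : R) (p : 'I_N -> pos3 R) :
  \det (k *: \sum_(i < N) w i *: (gvec x y (p i) *m (gvec x y (p i))^T)) =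
  k ^+ 2 * ((\sum_i w i * cg x y (p i) ^+ 2) * (\sum_i w i * sg x y (p i) ^+ 2)
            - (\sum_i w i * (cg x y (p i) * sg x y (p i))) ^+ 2).
Proof.
have entry : forall a b : 'I_2,
   (\sum_(i < N) w i *: (gvec x y (p i) *m (gvec x y (p i))^T)) a b =
   \sum_(i < N) w i * ((if a == 0 then cg x y (p i) else sg x y (p i)) *
                       (if b == 0 then cg x y (p i) else sg x y (p i))).
  by move=> a b; rewrite summxE; apply: eq_bigr => i _; rewrite mxE gvecE.
rewrite detZ det22 !entry /=.
rewrite !expr2; congr (_ * (_ * _ - _)).
congr (_ * _); apply: eq_bigr => i _; ring.
Qed.

Lemma pdist0 (u v : pos3 R) : pdist u v <= 0 -> u = v.
Proof.
move=> h.
have h0 : pdist u v == 0 by rewrite eq_le h /pdist sqrtr_ge0.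
move: h0; rewrite /pdist sqrtr_eq0 => hX.
have a0 := sqr_ge0 (px u - px v); have b0 := sqr_ge0 (py u - py v).
have c0 := sqr_ge0 (ph u - ph v).
have ea : (px u - px v) ^+ 2 == 0 by rewrite eq_le a0 andbT; lra.
have eb : (py u - py v) ^+ 2 == 0 by rewrite eq_le b0 andbT; lra.
have ec : (ph u - ph v) ^+ 2 == 0 by rewrite eq_le c0 andbT; lra.
move: ea eb ec; rewrite !sqrf_eq0 !subr_eq0 => /eqP ea /eqP eb /eqP ec.
move: ea eb ec; clear; case: u v => ? ? ? [? ? ?] /= -> -> ->. by [].
Qed.

Lemma feas_hover N (M : 'I_N -> nat) (r0 h0 t0 x y : R) (c : 'I_N -> nat -> pos3 R) :
  feasible M r0 h0 t0 0 x y c -> forall i j, (j < M i)%N -> c i j = c i 0%N.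
Proof.
move=> hf i; elim=> [//|j IH] hj.
have [_ _ hp] := hf i j.+1 hj.
have := hp isT; rewrite mulr0 /= => /pdist0 ->.
by apply: IH; apply: ltnW.
Qed.

Lemma sq_le (a b : R) : 0 <= a -> a <= b -> a ^+ 2 <= b ^+ 2.
Proof. by move=> a0 ab; rewrite !expr2; apply: ler_pM. Qed.

Lemma fbound (x y r0 h0 : R) p : 0 < r0 -> 0 < h0 ->
  r0 <= hdist x y p -> h0 <= ph p ->
  hdist x y p ^+ 2 / dist3 x y p ^+ 4 <=
  Num.max r0 h0 ^+ 2 / (Num.max r0 h0 ^+ 2 + h0 ^+ 2) ^+ 2.
Proof.
move=> r00 h00 hr hh.
have -> : dist3 x y p ^+ 4 = (hdist x y p ^+ 2 + ph p ^+ 2) ^+ 2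
  by rewrite -dist3_2 -exprM.
set r := hdist x y p in hr *; set h := ph p in hh *; set m := Num.max r0 h0.
have mr0 : r0 <= m by rewrite le_max lexx.
have mh0 : h0 <= m by rewrite le_max lexx orbT.
have m0 : 0 < m by lra.
have r0' : 0 < r by lra.
have h0' : 0 < h by lra.
have D1 : 0 < (r ^+ 2 + h ^+ 2) ^+ 2 by rewrite exprn_gt0 // addr_gt0 // exprn_gt0.
have D2 : 0 < (m ^+ 2 + h0 ^+ 2) ^+ 2 by rewrite exprn_gt0 // addr_gt0 // exprn_gt0.
rewrite ler_pdivrMr // mulrAC ler_pdivlMr //.
have step1 : m ^+ 2 * (r ^+ 2 + h0 ^+ 2) ^+ 2 <= m ^+ 2 * (r ^+ 2 + h ^+ 2) ^+ 2.
  apply: ler_wpM2l; first exact: sqr_ge0.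
  apply: sq_le; first by apply: addr_ge0; apply: sqr_ge0.
  by rewrite lerD2l; apply: sq_le; lra.
apply: le_trans step1.
set s := r ^+ 2; set S := m ^+ 2; set H := h0 ^+ 2.
have e : S * (s + H) ^+ 2 - s * (S + H) ^+ 2 = (S - s) * (H ^+ 2 - s * S) by ring.
suff : 0 <= (S - s) * (H ^+ 2 - s * S) by lra.
have sH : 0 <= H by exact: sqr_ge0.
have [hm|hm] := leP r0 h0.
- have mE : m = h0 by rewrite /m max_r.
  have -> : S = H by rewrite /S mE.
  have -> : (H - s) * (H ^+ 2 - s * H) = H * (H - s) ^+ 2 by ring.
  by apply: mulr_ge0 => //; exact: sqr_ge0.
- have mE : m = r0 by rewrite /m max_l // ltW.
  have sS : S <= s by rewrite /S /s mE; apply: sq_le; lra.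
  have HS : H <= S by rewrite /S /H mE; apply: sq_le; lra.
  rewrite -mulrNN; apply: mulr_ge0; first lra.
  have : H * H <= s * S by apply: ler_pM; lra.
  rewrite expr2; lra.
Qed.


End Main.

Theorem theorem4 (R : realType) (N : nat) (M : 'I_N -> nat)
    (sigma : 'I_N -> R) (gamma r0 h0 t0 cmax x y : R)
    (t : 'I_N) (u : 'I_N -> pos3 R) :
  (forall i, (1 <= M i)%N) ->
  (forall i, 0 < sigma i) ->
  0 < gamma -> 0 < r0 -> 0 < h0 -> 0 < t0 ->
  cmax = 0 ->
  (forall i, (M i)%:R / sigma i ^+ 2 <= (M t)%:R / sigma t ^+ 2) ->
  (M t)%:R / sigma t ^+ 2 > 2^-1 * \sum_(i < N) (M i)%:R / sigma i ^+ 2 ->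
  (forall i, hdist x y (u i) = Num.max r0 h0) ->
  (forall i, ph (u i) = h0) ->
  (forall i, i != t -> ((gvec x y (u t))^T *m gvec x y (u i)) 0 0 = 0) ->
  optimalP M sigma gamma r0 h0 t0 cmax x y (fun i _ => u i).
Proof.
move=> HM Hs Hg Hr0 Hh0 Ht0 Hc Hmax Hhalf Hhd Hph Horth; subst cmax.
set m := Num.max r0 h0.
have mr0 : r0 <= m by rewrite le_max lexx.
have mh0 : h0 <= m by rewrite le_max lexx orbT.
set K := m ^+ 2 / (m ^+ 2 + h0 ^+ 2) ^+ 2.
have K0 : 0 <= K by apply: divr_ge0; [exact: sqr_ge0 | exact: sqr_ge0].
pose a i := (M i)%:R / sigma i ^+ 2.
have a0 : forall i, 0 <= a i.
  by move=> i; apply: divr_ge0; [exact: ler0n | exact: sqr_ge0].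
pose V i := a i * K.
have hpos : forall i, 0 < hdist x y (u i) by move=> i; rewrite Hhd -/m; lra.
split.
  move=> i j _; split; first by rewrite Hhd.
    by rewrite Hph.
  by move=> _; rewrite /pdist !subrr expr0n /= !addr0 sqrtr0 mulr0.
move=> c' hf.
have hc' := @feas_hover _ _ _ _ _ _ _ _ _ hf.
have wu : forall i, (M i)%:R * (sigma i ^- 2 *
    (hdist x y (u i) ^+ 2 / dist3 x y (u i) ^+ 4)) = V i.
  move=> i; rewrite /V /a /K -mulrA; congr (_ * (_ * _)).
  have -> : dist3 x y (u i) ^+ 4 = (dist3 x y (u i) ^+ 2) ^+ 2 by rewrite -exprM.
  by rewrite dist3_2 Hhd Hph.
rewrite (@FIM_hover _ _ _ _ _ _ _ (fun i _ => u i) u) //.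
rewrite [in X in _ <= X](eq_bigr (fun i => V i *: (gvec x y (u i) *m (gvec x y (u i))^T)));
  last by move=> i _; rewrite wu.
rewrite (@FIM_hover _ _ _ _ _ _ _ c' (fun i => c' i 0%N)) //.
rewrite !detFIM.
rewrite (@attain _ _ t V (fun i => cg x y (u i)) (fun i => sg x y (u i))).
- apply: ler_wpM2l; first exact: sqr_ge0.
  apply: (@key _ _ t
     (fun i => (M i)%:R * (sigma i ^- 2 *
        (hdist x y (c' i 0%N) ^+ 2 / dist3 x y (c' i 0%N) ^+ 4))) V
     (fun i => cg x y (c' i 0%N)) (fun i => sg x y (c' i 0%N))).
  + move=> i /=; apply: mulr_ge0; first exact: ler0n.
    apply: mulr_ge0; first by rewrite invr_ge0; exact: sqr_ge0.
    by apply: divr_ge0; exact: exprn_ge0 (sqrtr_ge0 _).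
  + move=> i /=; rewrite mulrA /V.
    apply: ler_wpM2l; first exact: a0.
    have [h1 h2 _] := hf i 0%N (HM i).
    exact: fbound.
  + move=> i /=; apply: cs1.
    have [h1 _ _] := hf i 0%N (HM i); lra.
  + rewrite /V -mulr_suml; apply: ler_wpM2r => //.
    move: Hhalf; rewrite (bigD1 t) //= -/(a t).
    have -> : \sum_(i < N | i != t) (M i)%:R / sigma i ^+ 2 = \sum_(i < N | i != t) a i by [].
    lra.
- by move=> i; apply: cs1.
- move=> i it; have := Horth i it.
  rewrite mxE !big_ord_recl big_ord0 !mxE /= addr0.
  by rewrite /cg /sg.
Qed.
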